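(* Let $k\ge 2$ and let $\mathbf{A}$ be an algebra with a $0$-pointed or $1$-pointed $k$-cube term such that $\mathbf{A}^k$ is finitely generated. Then $d_{\mathbf{A}}(n)\in O(n^{k-1})$.
   Context: An algebra $\mathbf{A}$ has a $p$-pointed $k$-cube term if there is a term $F(x_1,\dots,x_m)$ in the language of $\mathbf{A}$ and a $k\times m$ matrix $M=[y_{i,j}]$ whose entries are variables and constant symbols (nullary operation symbols of the language), exactly $p$ distinct constant symbols occurring, such that every column of $M$ contains an entry different from the variable $x$ and the identities $F(y_{i,1},\dots,y_{i,m})\approx x$, $i=1,\dots,k$, hold in $\mathbf{A}$. $d_{\mathbf{A}}(n)$ is the least size of a generating set of $\mathbf{A}^n$. *)

(* Defs.v *)
From mathcomp Require Import all_boot.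
From Stdlib Require Import List.
Set Implicit Arguments.
Unset Strict Implicit.
Unset Printing Implicit Defensive.

(* A signature: operation symbols Fs with (finite) arities ar.
   An algebra of that signature: a carrier A with interpretations op. *)

Inductive term (Fs : Type) (ar : Fs -> nat) (V : Type) : Type :=
| Var : V -> term ar V
| App : forall f : Fs, ('I_(ar f) -> term ar V) -> term ar V.

Fixpoint eval (Fs : Type) (ar : Fs -> nat) (A : Type)
  (op : forall f : Fs, ('I_(ar f) -> A) -> A) (V : Type) (v : V -> A)
  (t : term ar V) : A :=
  match t with
  | Var x => v x
  | App f ts => op f (fun i => eval op v (ts i))
  end.

Definition empty_ord_fun (n : nat) (H : n == 0) (A : Type) : 'I_n -> A.
Proof. move=> i; exfalso; move/eqP: H i => -> [] //. Defined.

Definition const_sym (Fs : Type) (ar : Fs -> nat) := {c : Fs | ar c == 0}.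

(* Entries of the matrix M: a variable (x is variable 0) or a constant symbol. *)
Definition entry (Fs : Type) (ar : Fs -> nat) := (nat + const_sym ar)%type.

Definition eval_entry (Fs : Type) (ar : Fs -> nat) (A : Type)
  (op : forall f : Fs, ('I_(ar f) -> A) -> A) (v : nat -> A) (e : entry ar) : A :=
  match e with
  | inl j => v j
  | inr c => op (proj1_sig c) (empty_ord_fun (proj2_sig c) A)
  end.

(* A has a p-pointed k-cube term: a term F(x_1,...,x_m) and a k x m matrix M
   of variables and constant symbols, exactly p distinct constant symbols
   occurring in M, every column containing an entry different from the
   variable x (= variable 0), and A satisfying F(row_i of M) = x for all i. *)
Definition has_pointed_cube_term (Fs : Type) (ar : Fs -> nat) (A : Type)
  (op : forall f : Fs, ('I_(ar f) -> A) -> A) (p k : nat) : Prop :=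
  exists (m : nat) (F : term ar 'I_m) (M : 'I_k -> 'I_m -> entry ar),
    (exists cs : list Fs, length cs = p /\ NoDup cs /\
       (forall c : Fs, In c cs <->
          exists (i : 'I_k) (j : 'I_m) (Hc : ar c == 0),
            M i j = inr (exist _ c Hc))) /\
    (forall j : 'I_m, exists i : 'I_k, M i j <> inl 0%N) /\
    (forall (i : 'I_k) (v : nat -> A),
        eval op (fun j => eval_entry op v (M i j)) F = v 0%N).

Definition closed_power (Fs : Type) (ar : Fs -> nat) (A : Type)
  (op : forall f : Fs, ('I_(ar f) -> A) -> A) (n : nat)
  (B : ('I_n -> A) -> Prop) : Prop :=
  forall (f : Fs) (a : 'I_(ar f) -> ('I_n -> A)),
    (forall j, B (a j)) -> B (fun i => op f (fun j => a j i)).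

Definition generates_power (Fs : Type) (ar : Fs -> nat) (A : Type)
  (op : forall f : Fs, ('I_(ar f) -> A) -> A) (n m : nat)
  (g : 'I_m -> ('I_n -> A)) : Prop :=
  forall B : ('I_n -> A) -> Prop,
    closed_power op B -> (forall l, B (g l)) -> forall x, B x.

(* d_A(n) <= b : A^n has a generating set with at most b elements. *)
Definition d_le (Fs : Type) (ar : Fs -> nat) (A : Type)
  (op : forall f : Fs, ('I_(ar f) -> A) -> A) (n b : nat) : Prop :=
  exists (m : nat) (g : 'I_m -> ('I_n -> A)), m <= b /\ generates_power op g.

Definition power_fin_gen (Fs : Type) (ar : Fs -> nat) (A : Type)
  (op : forall f : Fs, ('I_(ar f) -> A) -> A) (n : nat) : Prop :=
  exists (m : nat) (g : 'I_m -> ('I_n -> A)), generates_power op g.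

(* Main.v *)
Require Import Defs.
From mathcomp Require Import all_boot.
From Stdlib Require Import FunctionalExtensionality.
Set Implicit Arguments.
Unset Strict Implicit.
Unset Printing Implicit Defensive.

Lemma closed_eval (Fs : Type) (ar : Fs -> nat) (A : Type)
  (op : forall f : Fs, ('I_(ar f) -> A) -> A) n (B : ('I_n -> A) -> Prop)
  (HB : closed_power op B) m (t : 'I_m -> 'I_n -> A) (Ht : forall j, B (t j))
  (F : term ar 'I_m) :
  B (fun d => eval op (fun j => t j d) F).
Proof.
elim: F => [x|f ts IH] /=; first exact: Ht.
exact: (HB f (fun i d => eval op (fun j => t j d) (ts i)) IH).
Qed.

Lemma key (Fs : Type) (ar : Fs -> nat) (A : Type)
  (op : forall f : Fs, ('I_(ar f) -> A) -> A) k' m (F : term ar 'I_m)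
  (M : 'I_k'.+2 -> 'I_m -> entry ar)
  (hcol : forall j, exists i, M i j <> inl 0%N)
  (hid : forall i (v : nat -> A), eval op (fun j => eval_entry op v (M i j)) F = v 0%N)
  (e : A)
  (He : forall i j (v : nat -> A), M i j <> inl 0%N ->
      (forall j', j' <> 0%N -> v j' = e) -> eval_entry op v (M i j) = e)
  n (d0 : 'I_n) (B : ('I_n -> A) -> Prop) (HB : closed_power op B)
  (Hsmall : forall (a : 'I_n -> A) (s : 'I_k'.+1 -> 'I_n),
      (forall d, (forall i, s i <> d) -> a d = e) -> B a) :
  forall a, B a.
Proof.
have small : forall (T : {set 'I_n}) a, #|T| < k'.+2 ->
    (forall d, d \notin T -> a d = e) -> B a.
  move=> T a hT ha.
  apply: (Hsmall a (fun i : 'I_k'.+1 => nth d0 (enum T) i)) => d hd; apply: ha.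
  apply/negP => dT.
  have hi : index d (enum T) < k'.+1.
    by rewrite -ltnS; apply: leq_ltn_trans hT; rewrite cardE index_mem mem_enum.
  by apply: (hd (inord (index d (enum T)))); rewrite inordK // nth_index ?mem_enum.
have main : forall N (T : {set 'I_n}) a, #|T| <= N ->
    (forall d, d \notin T -> a d = e) -> B a.
  elim=> [|N IH] T a hT ha.
    by apply: (small T) => //; apply: leq_ltn_trans hT _.
  case: (ltnP #|T| k'.+2) => hbig; first exact: (small T).
  pose r := fun d : 'I_n => (inord (minn (index d (enum T)) k'.+1) : 'I_k'.+2).
  pose vv := fun d (j : nat) => if j == 0%N then a d else e.
  pose t := fun j d => eval_entry op (vv d) (M (r d) j).
  have hv : forall d j', j' <> 0%N -> vv d j' = e.
    by move=> d j' /eqP /negbTE hj; rewrite /vv hj.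
  have Ht : forall j, B (t j).
    move=> j; have [i0 hi0] := hcol j.
    pose w := nth d0 (enum T) i0.
    have i0T : i0 < size (enum T) by rewrite -cardE; apply: leq_trans hbig.
    have wT : w \in T by rewrite -mem_enum mem_nth.
    have rw : r w = i0.
      apply: val_inj; rewrite /= /r /w (index_uniq d0 i0T (enum_uniq _)).
      by rewrite (minn_idPl _) ?inordK // -ltnS.
    apply: (IH [set d in T | r d != i0]).
      rewrite -ltnS; apply: leq_trans hT; apply: proper_card; apply/properP; split.
        by apply/subsetP => d; rewrite inE => /andP[].
      by exists w => //; rewrite inE rw eqxx andbF.
    move=> d; rewrite inE negb_and negbK => /orP[dT|/eqP rd].
      have ad := ha d dT.
      rewrite /t; case E: (M (r d) j) => [[|j']|c].
      - by rewrite /= /vv.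
      - by rewrite -E; apply: He; [rewrite E | exact: hv d].
      - by rewrite -E; apply: He; [rewrite E | exact: hv d].
    by rewrite /t rd; apply: He; [exact: hi0 | exact: hv d].
  have := closed_eval HB Ht F.
  have -> : (fun d => eval op (fun j => t j d) F) = a.
    by apply: functional_extensionality => d; rewrite /t hid /vv.
  done.
move=> a; apply: (main #|[set: 'I_n]| [set: 'I_n]) => // d.
by rewrite in_setT.
Qed.

Theorem corollary5p6 (Fs : Type) (ar : Fs -> nat) (A : Type)
  (op : forall f : Fs, ('I_(ar f) -> A) -> A) (k : nat) :
  2 <= k ->
  (has_pointed_cube_term op 0 k \/ has_pointed_cube_term op 1 k) ->
  power_fin_gen op k ->
  exists C N : nat, forall n : nat, N <= n -> d_le op n (C * n ^ (k - 1)).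
Proof.
case: k => [|[|k']] // _ Hcube [m0 [g Hg]].
exists m0, 1 => -[|n'] // _.
pose T := ('I_m0 * {ffun 'I_k'.+1 -> 'I_n'.+1})%type.
pose pi := fun (s : {ffun 'I_k'.+1 -> 'I_n'.+1}) (d : 'I_n'.+1) =>
  if [pick i | s i == d] is Some i then lift ord_max i else (ord_max : 'I_k'.+2).
pose gen := fun (p : T) (d : 'I_n'.+1) => g p.1 (pi p.2 d).
exists #|{: T}|, (fun i => gen (enum_val i)); split.
  by rewrite card_prod card_ffun !card_ord subSS subn0.
move=> B HB Hgens x.
have Hg' : forall l s, B (gen (l, s)).
  by move=> l s; have := Hgens (enum_rank (l, s)); rewrite enum_rankK.
have Hsmall : forall e (a : 'I_n'.+1 -> A) (s : 'I_k'.+1 -> 'I_n'.+1),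
    (forall d, (forall i, s i <> d) -> a d = e) -> B a.
  move=> e a s ha.
  pose z : 'I_k'.+2 -> A := fun i => if unlift ord_max i is Some i' then a (s i') else e.
  pose B' := fun w : 'I_k'.+2 -> A => B (fun d => w (pi (finfun s) d)).
  have HB' : B' z.
    apply: (Hg B') => [f a0 H|l]; first exact: (HB f (fun j d => a0 j (pi _ d)) H).
    exact: (Hg' l (finfun s)).
  suff <- : (fun d => z (pi (finfun s) d)) = a by [].
  apply: functional_extensionality => d; rewrite /pi; case: pickP => [i /eqP hi|hn].
    by rewrite /z liftK -hi ffunE.
  rewrite /z unlift_none; apply: esym; apply: ha => i hi.
  by move: (hn i); rewrite ffunE hi eqxx.
case: Hcube => -[m [F [M [[cs [hlen [hnd hcs]]] [hcol hid]]]]].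
- have He : forall i j (v : nat -> A), M i j <> inl 0%N ->
      (forall j', j' <> 0%N -> v j' = x ord0) -> eval_entry op v (M i j) = x ord0.
    move=> i j v hne hv; case E: (M i j) => [[|j']|[c Hc]].
    - by rewrite E in hne.
    - exact: hv.
    - have : List.In c cs by apply/hcs; exists i, j, Hc.
      by case: cs hlen {hnd hcs}.
  exact: (key hcol hid He ord0 HB (Hsmall _)).
- case: cs hlen hnd hcs => [|c0 [|? ?]] // _ _ hcs.
  have [i1 [j1 [Hc0 _]]] := (proj1 (hcs c0) (or_introl erefl)).
  have He : forall i j (v : nat -> A), M i j <> inl 0%N ->
      (forall j', j' <> 0%N -> v j' = op c0 (empty_ord_fun Hc0 A)) ->
      eval_entry op v (M i j) = op c0 (empty_ord_fun Hc0 A).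
    move=> i j v hne hv; case E: (M i j) => [[|j']|[c Hc]].
    - by rewrite E in hne.
    - exact: hv.
    - have : List.In c [:: c0] by apply/hcs; exists i, j, Hc.
      case=> [?|[]]; subst c => /=.
      by rewrite (eq_irrelevance Hc Hc0).
  exact: (key hcol hid He ord0 HB (Hsmall _)).
Qed.
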